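(* Let $M$ be a right $R$-module and consider: (i) $M$ is $M$-coherent; (ii) the intersection of any two finitely $M$-generated submodules of $M$ is finitely $M$-generated, and $\ker\varphi$ is finitely $M$-generated for every $\varphi\in\mathrm{End}_R(M)$. Then (i)$\Rightarrow$(ii). If moreover $M$ is intrinsically projective, then (i) and (ii) are equivalent.
   Context: $M^{(n)}$ denotes the direct sum of $n$ copies of $M$. A module $N$ is finitely $M$-generated if there is an epimorphism $M^{(n)}\to N$ for some $n>0$. A finitely $M$-generated module $N$ is $M$-coherent if for every $n>0$ and every homomorphism $\rho:M^{(n)}\to N$, $\ker\rho$ is finitely $M$-generated. $M$ is intrinsically projective if for every integer $n>0$, every submodule $N\le M$, every epimorphism $\alpha:M^{(n)}\to N$ and every homomorphism $\beta:M\to N$, there exists $\gamma:M\to M^{(n)}$ with $\alpha\gamma=\beta$. *)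

(* Defs.v *)
From HB Require Import structures.
From mathcomp Require Import all_boot all_order all_algebra.
Set Implicit Arguments. Unset Strict Implicit. Unset Printing Implicit Defensive.
Import GRing.Theory.
Local Open Scope ring_scope.

(* Right R-modules are represented as left modules over the converse ring R^c:
   for M : lmodType R^c, the scalar action  a *: m  is the right action  m a. *)

Notation dsum M n := {ffun 'I_n -> M}.

Section ModDefs.
Variable R : pzRingType.
Variable M : lmodType R.

Definition is_submodule (V : lmodType R) (S : V -> Prop) : Prop :=
  S 0 /\ (forall x y, S x -> S y -> S (x + y)) /\ (forall a x, S x -> S (a *: x)).

Definition fin_M_gen (V : lmodType R) (S : V -> Prop) : Prop :=
  exists n : nat, (0 < n)%N /\
    exists f : {linear dsum M n -> V},
      forall v, S v <-> exists x, f x = v.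

Definition ker (U V : lmodType R) (f : U -> V) : U -> Prop := fun x => f x = 0.

(* M is M-coherent (M is trivially finitely M-generated; N = M here) *)
Definition M_coherent_self : Prop :=
  fin_M_gen (fun _ : M => True) /\
  forall (n : nat), (0 < n)%N -> forall rho : {linear dsum M n -> M},
    fin_M_gen (ker rho).

Definition cond_ii : Prop :=
  (forall A B : M -> Prop, is_submodule A -> is_submodule B ->
     fin_M_gen A -> fin_M_gen B -> fin_M_gen (fun x => A x /\ B x)) /\
  (forall phi : {linear M -> M}, fin_M_gen (ker phi)).

Definition intrinsically_projective : Prop :=
  forall (n : nat), (0 < n)%N -> forall N : M -> Prop, is_submodule N ->
  forall alpha : {linear dsum M n -> M}, (forall v, N v <-> exists x, alpha x = v) ->
  forall beta : {linear M -> M}, (forall m, N (beta m)) ->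
  exists gamma : {linear M -> dsum M n}, forall m, alpha (gamma m) = beta m.
End ModDefs.

(* Main.v *)
Require Import Defs.
From HB Require Import structures.
From mathcomp Require Import all_boot all_order all_algebra.
From Stdlib Require Import ClassicalEpsilon.
Set Implicit Arguments. Unset Strict Implicit. Unset Printing Implicit Defensive.
Import GRing.Theory.
Local Open Scope ring_scope.

Section S.
Variable R : pzRingType.
Variable M : lmodType R.

Definition mkLin (U V : lmodType R) (f : U -> V) (H : linear f) : {linear U -> V} :=
  HB.pack f (GRing.isLinear.Build R U V *:%R f H).
Lemma mkLinE U V f H x : @mkLin U V f H x = f x. Proof. by []. Qed.

Definition Gen (V : lmodType R) (S : V -> Prop) :=
  exists n (f : {linear dsum M n -> V}), forall v, S v <-> exists x, f x = v.

Definition drop n (y : dsum M n.+1) : dsum M n := [ffun j => y (lift ord_max j)].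
Definition ext n (x : dsum M n) : dsum M n.+1 :=
  [ffun i => if unlift ord_max i is Some j then x j else 0].
Lemma drop_ext n x : drop (@ext n x) = x.
Proof. by apply/ffunP=> j; rewrite !ffunE liftK. Qed.
Lemma drop_lin n : linear (@drop n).
Proof. by move=> a u v; apply/ffunP=> j; rewrite !ffunE. Qed.
Definition dropL n := mkLin (@drop_lin n).

Lemma comp_lin (U V W : lmodType R) (f : {linear V -> W}) (g : {linear U -> V}) :
  linear (f \o g).
Proof. by move=> a u v /=; rewrite !linearP. Qed.
Definition compL U V W f g := mkLin (@comp_lin U V W f g).

Lemma Gen_fin (V : lmodType R) S : @Gen V S -> fin_M_gen M S.
Proof.
case=> n [f Hf]; exists n.+1; split => //; exists (compL f (dropL n)) => v.
rewrite Hf; split=> [[x <-]|[y <-]]; last by exists (drop y).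
by exists (ext x); rewrite /= drop_ext.
Qed.

Lemma fin_Gen (V : lmodType R) S : fin_M_gen M S -> @Gen V S.
Proof. by case=> n [_ [f Hf]]; exists n, f. Qed.

Lemma Gen_ext (V : lmodType R) (S T : V -> Prop) : Gen S -> (forall v, S v <-> T v) -> Gen T.
Proof. by case=> n [f Hf] E; exists n, f => v; rewrite -E. Qed.

Lemma Gen_img (V W : lmodType R) S (g : {linear V -> W}) :
  Gen S -> Gen (fun w => exists v, S v /\ g v = w).
Proof.
case=> n [f Hf]; exists n, (compL g f) => w /=.
split=> [[v [/Hf [x <-] <-]]|[x <-]]; first by exists x.
by exists (f x); split=> //; apply/Hf; exists x.
Qed.

Lemma Gen_im n (V : lmodType R) (f : {linear dsum M n -> V}) : Gen (fun v => exists x, f x = v).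
Proof. by exists n, f. Qed.

Lemma id_lin (V : lmodType R) : linear (@idfun V).
Proof. by []. Qed.

Lemma Gen_all n : Gen (fun _ : dsum M n => True).
Proof.
exists n, (mkLin (@id_lin _)) => v; split=> // _; by exists v.
Qed.

Definition lpart n m (x : dsum M (n + m)) : dsum M n := [ffun i => x (lshift m i)].
Definition rpart n m (x : dsum M (n + m)) : dsum M m := [ffun j => x (rshift n j)].
Definition catf n m (x : dsum M n) (y : dsum M m) : dsum M (n + m) :=
  [ffun k => match split k with inl i => x i | inr j => y j end].
Lemma lpart_cat n m x y : lpart (@catf n m x y) = x.
Proof.
apply/ffunP=> i; rewrite !ffunE.
by have -> : split (lshift m i) = inl i by exact: (unsplitK (inl i)).
Qed.
Lemma rpart_cat n m x y : rpart (@catf n m x y) = y.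
Proof.
apply/ffunP=> i; rewrite !ffunE.
by have -> : split (rshift n i) = inr i by exact: (unsplitK (inr i)).
Qed.
Lemma lpart_lin n m : linear (@lpart n m).
Proof. by move=> a u v; apply/ffunP=> j; rewrite !ffunE. Qed.
Lemma rpart_lin n m : linear (@rpart n m).
Proof. by move=> a u v; apply/ffunP=> j; rewrite !ffunE. Qed.

Lemma add_lin n m (V : lmodType R) (f : {linear dsum M n -> V}) (g : {linear dsum M m -> V}) :
  linear (fun x => f (lpart x) + g (rpart x)).
Proof.
move=> a u v /=; rewrite (lpart_lin a u v) (rpart_lin a u v) !linearP.
by rewrite scalerDr addrACA.
Qed.

Lemma sub_lin n m (V : lmodType R) (f : {linear dsum M n -> V}) (g : {linear dsum M m -> V}) :
  linear (fun x => f (lpart x) - g (rpart x)).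
Proof.
move=> a u v /=; rewrite (lpart_lin a u v) (rpart_lin a u v) !linearP.
rewrite scalerBr addrACA; congr (_ + _); by rewrite /= scalerN.
Qed.

Lemma Gen_add (V : lmodType R) (S1 S2 : V -> Prop) : Gen S1 -> Gen S2 ->
  Gen (fun v => exists a b, S1 a /\ S2 b /\ v = a + b).
Proof.
case=> n [f Hf] [m [g Hg]]; exists (n + m)%N, (mkLin (add_lin f g)) => v.
split.
  case=> a [b [/Hf [x <-] [/Hg [y <-] ->]]].
  by exists (catf x y); rewrite /= lpart_cat rpart_cat.
case=> x <-; exists (f (lpart x)), (g (rpart x)); split; first by apply/Hf; eexists.
by split => //; apply/Hg; eexists.
Qed.

Definition ev0 n (x : dsum M n.+1) : M := x ord0.
Lemma ev0_lin n : linear (@ev0 n).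
Proof. by move=> a u v; rewrite /ev0 !ffunE. Qed.
Definition ev0L n := mkLin (@ev0_lin n).

Lemma i_ii : M_coherent_self M -> cond_ii M.
Proof.
case=> _ Hc; split.
- move=> A B _ _ [n [n0 [a Ha]]] [m [m0 [b Hb]]].
  have nm0 : (0 < n + m)%N by rewrite addn_gt0 n0.
  have /fin_Gen HK := Hc (n+m)%N nm0 (mkLin (sub_lin a b)).
  apply: Gen_fin; apply: Gen_ext (Gen_img (compL a (mkLin (@lpart_lin n m))) HK) _.
  move=> v; split.
    case=> x [Kx <-]; rewrite /ker /= in Kx; split; first by apply/Ha; eexists.
    by apply/Hb; exists (rpart x); symmetry; apply/subr0_eq.
  case=> /Ha [x1 <-] /Hb [y1 E]; exists (catf x1 y1); split => /=.
    by rewrite /ker /= lpart_cat rpart_cat E subrr.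
  by rewrite lpart_cat.
- move=> phi.
  have /fin_Gen HK := Hc 1%N isT (compL phi (ev0L 0)).
  apply: Gen_fin; apply: Gen_ext (Gen_img (ev0L 0) HK) _.
  move=> v; split; first by case=> x [Kx <-].
  by move=> Kv; exists [ffun _ => v]; rewrite /ker /= /ev0 ffunE.
Qed.

Lemma img_sub (U V : lmodType R) (f : {linear U -> V}) :
  is_submodule (fun v => exists u, f u = v).
Proof.
split; first by exists 0; rewrite linear0.
split; first by move=> x y [u <-] [u' <-]; exists (u + u'); rewrite linearD.
by move=> a x [u <-]; exists (a *: u); rewrite linearZ.
Qed.

Lemma Gen_im_M (V : lmodType R) (f : {linear M -> V}) : Gen (fun v => exists u, f u = v).
Proof.
apply: Gen_ext (Gen_im (compL f (ev0L 0))) _ => v; split.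
  by case=> x <-; exists (x ord0).
by case=> u <-; exists [ffun _ => u]; rewrite /= /ev0 ffunE.
Qed.

Lemma IP_any : intrinsically_projective M -> forall n (alpha : {linear dsum M n -> M})
  (beta : {linear M -> M}), (forall m, exists x, alpha x = beta m) ->
  exists gamma : {linear M -> dsum M n}, forall m, alpha (gamma m) = beta m.
Proof.
move=> IP n alpha beta Hb.
have [|g Hg] := IP n.+1 isT _ (img_sub alpha) (compL alpha (dropL n)) _ beta Hb.
  move=> v; split => [[x <-]|[y <-]]; last by exists (drop y).
  by exists (ext x); rewrite /= drop_ext.
by exists (compL (dropL n) g) => m; exact: Hg m.
Qed.

Lemma IP_M : intrinsically_projective M -> forall (phi beta : {linear M -> M}),
  (forall m, exists u, phi u = beta m) ->
  exists gamma : {linear M -> M}, forall m, phi (gamma m) = beta m.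
Proof.
move=> IP phi beta Hb.
have [|g Hg] := @IP_any IP _ (compL phi (ev0L 0)) beta.
  move=> m; have [u Hu] := Hb m; exists [ffun _ => u]; by rewrite /= /ev0 ffunE.
by exists (compL (ev0L 0) g) => m; exact: Hg m.
Qed.

Definition single k (i : 'I_k) (m : M) : dsum M k := [ffun j => if j == i then m else 0].
Lemma single_lin k i : linear (@single k i).
Proof.
move=> a u v; apply/ffunP=> j; rewrite !ffunE.
by case: (j == i); rewrite ?scaler0 ?addr0.
Qed.
Definition singleL k i := mkLin (@single_lin k i).

Lemma sum_single k (w : dsum M k) : w = \sum_i single i (w i).
Proof.
apply/ffunP=> j; rewrite sum_ffunE (bigD1 j) //= ffunE eqxx big1 ?addr0 //.
by move=> i ne; rewrite ffunE eq_sym (negbTE ne).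
Qed.

Lemma lift_all (U : lmodType R) (alpha : {linear U -> M})
  (Hlift : forall beta : {linear M -> M}, (forall m, exists u, alpha u = beta m) ->
     exists gamma : {linear M -> U}, forall m, alpha (gamma m) = beta m)
  k (c : {linear dsum M k -> M}) (Hc : forall w, exists u, alpha u = c w) :
  exists G : {linear dsum M k -> U}, forall w, alpha (G w) = c w.
Proof.
have H : forall i : 'I_k, {gamma : {linear M -> U} |
    forall m, alpha (gamma m) = compL c (singleL i) m}.
  by move=> i; apply: constructive_indefinite_description; apply: Hlift => m; exact: Hc.
pose G (w : dsum M k) := \sum_i proj1_sig (H i) (w i).
have Gl : linear G.
  move=> a u v; rewrite /G scaler_sumr -big_split /=; apply: eq_bigr => i _.
  by rewrite !ffunE linearP.
exists (mkLin Gl) => w /=; rewrite /G linear_sum /=.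
rewrite [in RHS](sum_single w) linear_sum; apply: eq_bigr => i _.
exact: (proj2_sig (H i)).
Qed.

Definition cons n (a : M) (y : dsum M n) : dsum M n.+1 :=
  [ffun i => if unlift ord0 i is Some j then y j else a].
Lemma cons_hdtl n (x : dsum M n.+1) : x = cons (x ord0) [ffun j => x (lift ord0 j)].
Proof. by apply/ffunP=> i; rewrite ffunE; case: unliftP => [j ->|->]; rewrite ?ffunE. Qed.
Lemma consP n r u v (y z : dsum M n) :
  cons (r *: u + v) (r *: y + z) = r *: cons u y + cons v z.
Proof. by apply/ffunP=> i; rewrite !ffunE; case: unliftP => [j|] _; rewrite ?ffunE. Qed.
Lemma cons_add n a (y : dsum M n) : cons a y = cons a 0 + cons 0 y.
Proof.
by apply/ffunP=> i; rewrite !ffunE; case: unliftP => [j|] _; rewrite ?ffunE ?addr0 ?add0r.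
Qed.
Lemma consA_lin n : linear (fun a => @cons n a 0).
Proof. by move=> r u v; rewrite -consP scaler0 addr0. Qed.
Lemma consY_lin n : linear (fun y => @cons n 0 y).
Proof. by move=> r u v; rewrite -consP scaler0 addr0. Qed.
Definition consAL n := mkLin (@consA_lin n).
Definition consYL n := mkLin (@consY_lin n).

Lemma kerGen : cond_ii M -> intrinsically_projective M ->
  forall n (rho : {linear dsum M n -> M}), Gen (ker rho).
Proof.
move=> [Hint Hker] IP; elim=> [|n IH] rho.
  apply: Gen_ext (Gen_all 0) _ => x; split=> // _.
  have -> : x = 0 by apply/ffunP => -[].
  by rewrite /ker linear0.
pose rho2 := compL rho (consAL n); pose rho1 := compL rho (consYL n).
have rhoE a y : rho (cons a y) = rho2 a + rho1 y by rewrite cons_add linearD.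
have IH1 := IH rho1.
have H2 := fin_Gen (Hker rho2).
have [k [_ [c Hc]]] := Hint _ _ (img_sub rho1) (img_sub rho2)
   (Gen_fin (Gen_im rho1)) (Gen_fin (Gen_im_M rho2)).
have [G1 HG1] := lift_all (@IP_any IP _ rho1) (fun w => proj1 (proj2 (Hc (c w)) (ex_intro _ w erefl))).
have [G2 HG2] := lift_all (@IP_M IP rho2) (fun w => proj2 ((proj2 (Hc (c w)) (ex_intro _ w erefl)))).
pose H w := cons (- G2 w) (G1 w).
have Hl : linear H.
  move=> r u v; rewrite /H !linearP -consP; congr cons; rewrite /= opprD scalerN.
apply: Gen_ext (Gen_add (Gen_add (Gen_img (consAL n) H2) (Gen_img (consYL n) IH1))
                        (Gen_img (mkLin Hl) (Gen_all k))) _.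
move=> x; split.
  case=> a [b [[a' [b' [[v1 [K1 <-]] [[v2 [K2 <-]] ->]]]] [[[w [_ <-]] ->]]]].
  rewrite /ker /= !linearD /= !rhoE /H.
  rewrite /ker in K1 K2; rewrite K1 K2 HG1 !linear0 linearN HG2.
  by rewrite !addr0 !add0r addNr.
move=> Kx; rewrite /ker in Kx.
set a := x ord0; set y := [ffun j => x (lift ord0 j)].
have Ex : rho2 a + rho1 y = 0 by rewrite -rhoE -cons_hdtl.
have [w Hw] : exists w, c w = rho1 y.
  apply/(Hc (rho1 y)); split; first by exists y.
  by exists (- a); rewrite raddfN; apply/eqP; rewrite eq_sym -addr_eq0 addrC Ex.
exists (cons (a + G2 w) 0 + cons 0 (y - G1 w)), (H w); split.
  exists (cons (a + G2 w) 0), (cons 0 (y - G1 w)); split.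
    exists (a + G2 w); split => //.
    by rewrite /ker linearD HG2 Hw.
  split => //; exists (y - G1 w); split => //.
  by rewrite /ker linearB HG1 Hw subrr.
split; first by exists w.
rewrite {1}(cons_hdtl x) -/a -/y /H.
apply/ffunP=> i; rewrite !ffunE; case: unliftP => [j|] _; rewrite ?ffunE.
  by rewrite add0r subrK.
by rewrite addr0 addrK.
Qed.

End S.

Theorem mainTheorem13 (R : pzRingType) (M : lmodType R^c) :
  (M_coherent_self M -> cond_ii M) /\
  (intrinsically_projective M -> (M_coherent_self M <-> cond_ii M)).
Proof.
split; first exact: i_ii.
move=> IP; split; first exact: i_ii.
move=> Hii; split.
  apply: Gen_fin; apply: Gen_ext (Gen_im_M (mkLin (@id_lin _ M))) _ => v.
  by split=> // _; exists v.
by move=> n _ rho; apply: Gen_fin; exact: kerGen.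
Qed.
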